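(* Assume $X=\{0,1\}^n$, $R(X)=[0,1]^n$, $Q'$ is monotone submodular on $X$ (viewed as a set function on $2^{[n]}$ via indicator vectors), and its extension $Q:[0,1]^n\to\mathbb{R}$ is component-wise monotonically nondecreasing on $[0,1]^n$. Then for every $\hat{\mathbf{x}}\in[0,1]^n$, the set function $I\mapsto g_{\hat{\mathbf{x}}}^Q(I)$ on $2^{[n]}$ is monotone submodular.
   Context: $Q(\mathbf{x})=Q'(\mathbf{x})$ for $\mathbf{x}\in\{0,1\}^n$. A set function $f:2^{[n]}\to\mathbb{R}$ is monotone submodular if $f(S)\le f(T)$ whenever $S\subseteq T\subseteq[n]$, and $f(S\cup\{j\})+f(S\cup\{k\})\geq f(S\cup\{j,k\})+f(S)$ for all $S\subseteq[n]$ and distinct $j,k\in[n]\setminus S$. A function of binary variables is identified with a set function via $f(A)=f(\chi_A)$, $\chi_A$ the indicator vector of $A$. For $I\subseteq[n]$ and $\chi\in\{0,1\}^I$, $\nu_I^Q(\chi):=\min\{Q(\mathbf{x}):\mathbf{x}\in[0,1]^n,\ \mathbf{x}_I=\chi\}$, where $\mathbf{x}_I$ is the subvector indexed by $I$. The cut violation function is $$g_{\hat{\mathbf{x}}}^Q(I)=\max_{\mu\in\mathbb{R}^I,\eta\in\mathbb{R}}\Big\{\sum_{i\in I}\mu_i\hat{x}_i+\eta:\ \sum_{i\in I}\mu_i\chi_i+\eta\leq \nu_I^Q(\chi)\ \ \forall \chi\in\{0,1\}^I\Big\}.$$ *)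

(* Defs.v *)
From mathcomp Require Import all_boot all_order all_algebra.
From mathcomp Require Import classical_sets reals.
Set Implicit Arguments. Unset Strict Implicit. Unset Printing Implicit Defensive.
Import Order.TTheory GRing.Theory Num.Theory.
Local Open Scope ring_scope.
Local Open Scope classical_set_scope.

Section Defs.
Variable R : realType.

Definition monotone_submodular (n : nat) (f : {set 'I_n} -> R) : Prop :=
  (forall S T : {set 'I_n}, S \subset T -> f S <= f T) /\
  (forall (S : {set 'I_n}) (j k : 'I_n), j != k -> j \notin S -> k \notin S ->
     f (j |: S) + f (k |: S) >= f (j |: (k |: S)) + f S).

Definition indic (n : nat) (A : {set 'I_n}) : 'I_n -> R := fun i => (i \in A)%:R.

Definition in_box (n : nat) (x : 'I_n -> R) : Prop := forall i, 0 <= x i <= 1.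

Definition compwise_nondecr (n : nat) (Q : ('I_n -> R) -> R) : Prop :=
  forall (x : 'I_n -> R) (i : 'I_n) (t : R), in_box x -> x i <= t -> t <= 1 ->
    Q x <= Q (fun j => if j == i then t else x j).

(* nu_I^Q(chi) = min { Q x : x in [0,1]^n, x_I = chi }; chi in {0,1}^I is
   represented by a boolean function on 'I_n, only its values on I matter. *)
Definition nu (n : nat) (Q : ('I_n -> R) -> R) (I : {set 'I_n})
    (chi : 'I_n -> bool) : R :=
  inf [set Q x | x in [set x : 'I_n -> R |
         in_box x /\ forall i, i \in I -> x i = (chi i)%:R]].

(* cut violation function g_{xh}^Q(I): optimal value of the LP over
   (mu, eta) in R^I x R (mu represented by a function on 'I_n, only its
   values on I are used). *)
Definition cut_violation (n : nat) (Q : ('I_n -> R) -> R) (xh : 'I_n -> R)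
    (I : {set 'I_n}) : R :=
  sup [set \sum_(i in I) p.1 i * xh i + p.2 | p in
        [set p : ('I_n -> R) * R | forall chi : 'I_n -> bool,
           \sum_(i in I) p.1 i * (chi i)%:R + p.2 <= nu Q I chi]].

End Defs.

(* Main.v *)
Require Import Defs.
From mathcomp Require Import all_boot all_order all_algebra.
From mathcomp Require Import boolp classical_sets reals.
From mathcomp Require Import lra.
Import finset.
Import Order.TTheory GRing.Theory Num.Theory.
Local Open Scope ring_scope.

Lemma sup_eqx (R : realType) (E : set R) x : E x -> ubound E x -> sup E = x.
Proof.
move=> Ex ub; apply/le_anti; rewrite ge_sup //=; last by exists x.
by rewrite (ub_le_sup (ex_intro _ x ub)).
Qed.

Lemma inf_eqx (R : realType) (E : set R) x : E x -> lbound E x -> inf E = x.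
Proof.
move=> Ex lb; apply/le_anti; rewrite lb_le_inf //=; last by exists x.
by rewrite (ge_inf (ex_intro _ x lb)).
Qed.

Lemma dimret (R : realType) n (f : {set 'I_n} -> R) : monotone_submodular f ->
  forall (A B : {set 'I_n}) x, A \subset B -> x \notin B -> f (x |: B) - f B <= f (x |: A) - f A.
Proof.
move=> [_ hs] A B x; move: {2}#|B :\: A| (erefl #|B :\: A|) => k.
elim: k B => [|k IH] B hk hAB hx.
  move/eqP: hk; rewrite cards_eq0 finset.setD_eq0 => hBA.
  by have -> : B = A by apply/eqP; rewrite finset.eqEsubset hBA hAB.
have : (0 < #|B :\: A|)%N by rewrite hk.
case/card_gt0P => y; rewrite inE => /andP [yA yB].
have hB' : y |: (B :\ y) = B by rewrite finset.setD1K.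
have hAB' : A \subset B :\ y.
  apply/fintype.subsetP => z zA; rewrite !inE (fintype.subsetP hAB) // andbT.
  by apply/eqP => zy; move: yA; rewrite -zy zA.
have hk' : #|(B :\ y) :\: A| = k.
  have : (B :\ y) :\: A = (B :\: A) :\ y.
    by apply/setP => z; rewrite !inE; case: (z == y); case: (z \in A).
  move=> ->; move: hk; rewrite (cardsD1 y) !inE yA yB /=.
  by rewrite add1n => -[].
have hx' : x \notin B :\ y by rewrite !inE (negbTE hx) andbF.
have IH' := IH _ hk' hAB' hx'.
have xy : x != y by apply/eqP => xy; move: hx; rewrite xy yB.
have hy : y \notin B :\ y by rewrite !inE eqxx.
have := hs (B :\ y) x y xy hx' hy.
rewrite hB' => h.
move: IH' h. lra.
Qed.

Lemma Qmono (R : realType) n (Q : ('I_n -> R) -> R) : compwise_nondecr Q ->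
  forall y x : 'I_n -> R, in_box y -> in_box x -> (forall i, y i <= x i) -> Q y <= Q x.
Proof.
move=> hmon y x hy hx hyx.
move: {2}#|[set i | y i != x i]| (erefl #|[set i | y i != x i]|) => k.
elim: k y hy hyx => [|k IH] y hy hyx hk.
  move/eqP: hk; rewrite cards_eq0 => /eqP h0.
  have -> : y = x.
    apply/funext => i; apply/eqP; apply/negPn/negP => hi.
    by move/setP: h0 => /(_ i); rewrite !inE hi.
  by [].
have : (0 < #|[set i | y i != x i]|)%N by rewrite hk.
case/card_gt0P => i; rewrite inE => hi.
pose y' := fun j => if j == i then x i else y j.
have h1 : Q y <= Q y'.
  by apply: (hmon y i (x i) hy (hyx i)); case/andP: (hx i).
apply: le_trans h1 _; apply: IH.
- by move=> j; rewrite /y'; case: (j == i); [exact: hx | exact: hy].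
- by move=> j; rewrite /y'; case: (eqVneq j i) => [->|_].
- have -> : [set j | y' j != x j] = [set j | y j != x j] :\ i.
    apply/setP => j; rewrite !inE /y'; case: (eqVneq j i) => [->|]; first by rewrite eqxx.
    by [].
  by move: hk; rewrite (cardsD1 i) inE hi add1n => -[].
Qed.

Lemma indic_box (R : realType) n (A : {set 'I_n}) : in_box (indic R A).
Proof. by move=> i; rewrite /indic; case: (i \in A) => /=; apply/andP; split; lra. Qed.

Lemma nuE (R : realType) n (Q' : {set 'I_n} -> R) (Q : ('I_n -> R) -> R)
    (hext : forall A : {set 'I_n}, Q (indic R A) = Q' A)
    (hmon : compwise_nondecr Q) I chi :
  nu Q I chi = Q' [set i in I | chi i].
Proof.
rewrite /nu; apply: inf_eqx.
  exists (indic R [set i in I | chi i]); last by rewrite hext.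
  split; first exact: indic_box.
  by move=> i hi; rewrite /indic inE hi.
move=> _ [x [hxb hxI] <-]; rewrite -hext; apply: Qmono => //.
  exact: indic_box.
move=> i; rewrite /indic inE; case hi: (i \in I) => /=.
  by rewrite hxI.
by case/andP: (hxb i).
Qed.

Definition ss {R : realType} {n} (xh : 'I_n -> R) : seq 'I_n :=
  sort (fun i j => xh j <= xh i) (enum 'I_n).
Definition TT {R : realType} {n} (xh : 'I_n -> R) (k : nat) : {set 'I_n} :=
  [set x in take k (ss xh)].
Definition aa {R : realType} {n} (xh : 'I_n -> R) (k : nat) : R :=
  nth 0 (1 :: map xh (ss xh)) k.
Definition lam {R : realType} {n} (xh : 'I_n -> R) (k : nat) : R :=
  aa xh k - aa xh k.+1.
Definition pos {R : realType} {n} (xh : 'I_n -> R) (i : 'I_n) : nat := index i (ss xh).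

Section S.
Context (R : realType) (n : nat) (xh : 'I_n -> R).

Lemma ss_perm : perm_eq (ss xh) (enum 'I_n).
Proof. exact/permEl/perm_sort. Qed.
Lemma ss_uniq : uniq (ss xh).
Proof. by rewrite (perm_uniq ss_perm) enum_uniq. Qed.
Lemma ss_size : size (ss xh) = n.
Proof. by rewrite (perm_size ss_perm) size_enum_ord. Qed.
Lemma ss_mem i : i \in ss xh.
Proof. by rewrite (perm_mem ss_perm) mem_enum. Qed.
Lemma ss_sorted x0 k : (k.+1 < n)%N -> xh (nth x0 (ss xh) k.+1) <= xh (nth x0 (ss xh) k).
Proof.
move=> hk.
have : sorted (fun i j => xh j <= xh i) (ss xh).
  by apply: sort_sorted => i j; apply: le_total.
by move/sortedP => /(_ x0 k); rewrite ss_size => /(_ hk).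
Qed.
Lemma pos_lt i : (pos xh i < n)%N.
Proof. by rewrite /pos -[X in (_ < X)%N]ss_size index_mem ss_mem. Qed.


Hypothesis hbox : in_box xh.

Lemma aa0 : aa xh 0 = 1. Proof. by []. Qed.
Lemma aaS x0 m : (m < n)%N -> aa xh m.+1 = xh (nth x0 (ss xh) m).
Proof. by move=> hm; rewrite /aa /= (nth_map x0) // ss_size. Qed.
Lemma aa_big k : (n < k)%N -> aa xh k = 0.
Proof. by move=> hk; rewrite /aa nth_default //= size_map ss_size. Qed.

Lemma aa_range k : 0 <= aa xh k <= 1.
Proof.
case: k => [|m]; first by rewrite aa0; apply/andP; split; lra.
have [hm|hm] := ltnP m n.
  by rewrite (aaS (Ordinal hm)) //; apply: hbox.
by rewrite aa_big ?ltnS //; apply/andP; split; lra.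
Qed.

Lemma aa_dec k : aa xh k.+1 <= aa xh k.
Proof.
case: k => [|m]; first by rewrite aa0; case/andP: (aa_range 1).
have [hm|hm] := ltnP m.+1 n.
  have hm' : (m < n)%N by apply: ltn_trans hm.
  rewrite (aaS (Ordinal hm')) // (aaS (Ordinal hm')) //.
  exact: ss_sorted.
by rewrite (@aa_big m.+2) ?ltnS //; case/andP: (aa_range m.+1).
Qed.

Lemma lam_ge0 k : 0 <= lam xh k.
Proof. by rewrite /lam subr_ge0 aa_dec. Qed.

Lemma sum_lam : \sum_(k < n.+1) lam xh k = 1.
Proof.
rewrite -(big_mkord xpredT (fun k => lam xh k)).
have -> : \sum_(0 <= k < n.+1) lam xh k = - \sum_(0 <= k < n.+1) (aa xh k.+1 - aa xh k).
  by rewrite -sumrN; apply: eq_bigr => k _; rewrite /lam opprB.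
by rewrite telescope_sumr // aa_big // aa0 opprB subr0.
Qed.

Lemma inTT i k : (i \in TT xh k) = (pos xh i < k)%N.
Proof. by rewrite /TT inE in_take // ss_mem. Qed.

Lemma TT0 : TT xh 0 = finset.set0.
Proof. by apply/setP => i; rewrite inTT inE. Qed.

Lemma TTn : TT xh n = [set: 'I_n].
Proof. by apply/setP => i; rewrite inTT inE pos_lt. Qed.

Lemma TTS x0 k : (k < n)%N -> TT xh k.+1 = nth x0 (ss xh) k |: TT xh k.
Proof.
move=> hk; apply/setP => i; rewrite /TT !inE (take_nth x0) ?ss_size //.
by rewrite mem_rcons in_cons.
Qed.

Lemma pos_nth x0 k : (k < n)%N -> pos xh (nth x0 (ss xh) k) = k.
Proof. by move=> hk; rewrite /pos index_uniq ?ss_size ?ss_uniq. Qed.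

Lemma nth_notin x0 k : (k < n)%N -> nth x0 (ss xh) k \notin TT xh k.
Proof. by move=> hk; rewrite inTT pos_nth // ltnn. Qed.

Lemma TT_pos i : TT xh (pos xh i).+1 = i |: TT xh (pos xh i).
Proof.
have h := pos_lt i.
by rewrite (TTS i _ h) /pos nth_index ?ss_mem.
Qed.

Lemma notin_TT_pos i : i \notin TT xh (pos xh i).
Proof. by rewrite inTT ltnn. Qed.

Lemma tele (h : {set 'I_n} -> R) k : (k <= n)%N ->
  \sum_(i in TT xh k) (h (TT xh (pos xh i).+1) - h (TT xh (pos xh i)))
  = h (TT xh k) - h (TT xh 0).
Proof.
elim: k => [|k IH] hk.
  by rewrite TT0 big_set0 subrr.
have hk' : (k < n)%N by [].
pose x0 := Ordinal hk'.
rewrite [in LHS](TTS x0 _ hk').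
rewrite big_setU1; last exact: nth_notin.
rewrite pos_nth // IH; last exact: ltnW.
by rewrite /= addrA subrK.
Qed.

Lemma decomp i : xh i = \sum_(k < n.+1) lam xh k * (i \in TT xh k)%:R.
Proof.
rewrite -(big_mkord xpredT (fun k => lam xh k * (i \in TT xh k)%:R)).
have hm := pos_lt i.
rewrite (big_cat_nat (n := (pos xh i).+1)) //=; last by apply: ltnW.
rewrite big_nat_cond big1 ?add0r; last first.
  by move=> k /andP [/andP [_ hk] _]; rewrite inTT ltnNge -ltnS hk mulr0.
rewrite (eq_big_nat _ _ (F2 := fun k => - (aa xh k.+1 - aa xh k))); last first.
  move=> k /andP [hk _]; rewrite inTT hk mulr1 /lam opprB //.
rewrite sumrN telescope_sumr; last exact: ltnW.
rewrite (@aa_big n.+1) // sub0r opprK.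
by rewrite (aaS i) // /pos nth_index ?ss_mem.
Qed.

End S.
Arguments notin_TT_pos {R n}.
Arguments tele {R n}.
Arguments decomp {R n}.
Arguments sum_lam {R n xh}.
Arguments lam_ge0 {R n xh}.
Arguments TT_pos {R n}.
Arguments TTn {R n}.
Arguments TT0 {R n}.

Lemma setIU1_in (T' : finType) (i : T') (T I : {set T'}) :
  i \in I -> (i |: T) :&: I = i |: (T :&: I).
Proof. by move=> hi; apply/setP => x; rewrite !inE; case: (eqVneq x i) => [->|]; rewrite ?hi. Qed.
Lemma setIU1_notin (T' : finType) (i : T') (T I : {set T'}) :
  i \notin I -> (i |: T) :&: I = T :&: I.
Proof. by move=> hi; apply/setP => x; rewrite !inE; case: (eqVneq x i) => [->|]; rewrite ?(negbTE hi) ?andbF. Qed.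

Definition LL {R : realType} {n} (f : {set 'I_n} -> R) (xh : 'I_n -> R) (I : {set 'I_n}) : R :=
  \sum_(k < n.+1) lam xh k * f (TT xh k :&: I).

Section M.
Context (R : realType) (n : nat) (Q' : {set 'I_n} -> R) (Q : ('I_n -> R) -> R)
    (hext : forall A : {set 'I_n}, Q (indic R A) = Q' A)
    (hsub : monotone_submodular Q')
    (hmon : compwise_nondecr Q) (xh : 'I_n -> R) (hbox : in_box xh).

Lemma sum_in_TT (F : 'I_n -> R) k :
  \sum_i F i * (i \in TT xh k)%:R = \sum_(i in TT xh k) F i.
Proof.
rewrite [RHS]big_mkcond; apply: eq_bigr => i _.
by rewrite mulr_natr; case: (i \in TT xh k); rewrite /= ?mulr1n ?mulr0n.
Qed.

Lemma cvE I : cut_violation Q xh I = LL Q' xh I.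
Proof.
pose mu := fun i => Q' (TT xh (pos xh i).+1 :&: I) - Q' (TT xh (pos xh i) :&: I).
have mu0 i : i \notin I -> mu i = 0.
  by move=> hi; rewrite /mu TT_pos setIU1_notin // subrr.
rewrite /cut_violation; apply: sup_eqx.
  exists (mu, Q' finset.set0) => /=.
    move=> chi; rewrite (nuE _ _ _ _ hext hmon).
    set S := [set i in I | chi i].
    have SI : S \subset I by apply/fintype.subsetP => i; rewrite inE => /andP [].
    have e1 : \sum_(i in I) mu i * (chi i)%:R = \sum_(i in S) mu i.
      rewrite big_mkcond [RHS]big_mkcond; apply: eq_bigr => i _; rewrite inE.
      by rewrite mulr_natr; case: (i \in I); case: (chi i); rewrite /= ?mulr1n ?mulr0n.
    pose g := fun i => Q' (TT xh (pos xh i).+1 :&: S) - Q' (TT xh (pos xh i) :&: S).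
    have e2 : \sum_(i in S) mu i <= \sum_(i in S) g i.
      apply: ler_sum => i hiS.
      have hiI : i \in I by apply: (fintype.subsetP SI).
      rewrite /mu /g !TT_pos setIU1_in // setIU1_in //.
      apply: (dimret _ _ _ hsub); first by apply: finset.setIS.
      by rewrite inE (negbTE (notin_TT_pos xh i)).
    have e3 : \sum_(i in S) g i = \sum_(i in TT xh n) g i.
      rewrite TTn [RHS]big_mkcond [LHS]big_mkcond; apply: eq_bigr => i _.
      rewrite finset.in_setT; case hi: (i \in S) => //.
      by rewrite /g TT_pos setIU1_notin ?hi // subrr.
    have e4 := tele xh (fun T => Q' (T :&: S)) n (leqnn n).
    rewrite e1; apply: (@le_trans _ _ (\sum_(i in S) g i + Q' finset.set0)).
      by rewrite lerD2r.
    by rewrite e3 /g e4 /= TTn TT0 finset.setTI finset.set0I subrK.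
  have v1 : \sum_(i in I) mu i * xh i = \sum_i mu i * xh i.
    rewrite [LHS]big_mkcond; apply: eq_bigr => i _.
    by case hi: (i \in I) => //; rewrite mu0 ?hi // mul0r.
  rewrite v1.
  under eq_bigr => i _ do rewrite (decomp xh i) mulr_sumr.
  rewrite exchange_big /=.
  have v2 : forall k : 'I_n.+1, \sum_i mu i * (lam xh k * (i \in TT xh k)%:R)
      = lam xh k * (Q' (TT xh k :&: I) - Q' finset.set0).
    move=> k; under eq_bigr => i _ do rewrite mulrCA.
    rewrite -mulr_sumr sum_in_TT /mu /= (tele xh (fun T => Q' (T :&: I)) k); last by rewrite -ltnS.
    by rewrite TT0 finset.set0I.
  under eq_bigr => k _ do rewrite v2.
  rewrite /LL; under eq_bigr => k _ do rewrite mulrBr.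
  by rewrite sumrB -mulr_suml sum_lam mul1r subrK.
move=> _ [[m eta] /= hfeas <-].
under eq_bigr => i _ do rewrite (decomp xh i) mulr_sumr.
have eE : eta = \sum_(k < n.+1) lam xh k * eta by rewrite -mulr_suml sum_lam mul1r.
rewrite exchange_big /= [X in _ + X]eE -big_split /=.
rewrite /LL; apply: ler_sum => k _.
have := hfeas (fun i => i \in TT xh k); rewrite (nuE _ _ _ _ hext hmon) => h.
have eS : [set i in I | i \in TT xh k] = TT xh k :&: I.
  by apply/setP => i; rewrite !inE andbC.
rewrite eS in h.
under eq_bigr => i _ do rewrite mulrCA.
rewrite -mulr_sumr -mulrDr; apply: ler_wpM2l; first exact: lam_ge0.
exact: h.
Qed.

End M.

Lemma setI_U1_in (T' : finType) (j : T') (T S : {set T'}) :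
  j \in T -> T :&: (j |: S) = j |: (T :&: S).
Proof. by move=> hj; apply/setP => x; rewrite !inE; case: (eqVneq x j) => [->|]; rewrite ?hj. Qed.
Lemma setI_U1_notin (T' : finType) (j : T') (T S : {set T'}) :
  j \notin T -> T :&: (j |: S) = T :&: S.
Proof. by move=> hj; apply/setP => x; rewrite !inE; case: (eqVneq x j) => [->|]; rewrite ?(negbTE hj). Qed.

Arguments setI_U1_in {T' j T S}.
Arguments setI_U1_notin {T' j T S}.

Lemma LL_ms (R : realType) n (f : {set 'I_n} -> R) (xh : 'I_n -> R) :
  in_box xh -> monotone_submodular f -> monotone_submodular (LL f xh).
Proof.
move=> hbox [hm hs]; split.
  move=> S T hST; rewrite /LL; apply: ler_sum => t _.
  apply: ler_wpM2l; first exact: lam_ge0.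
  by apply: hm; apply: finset.setIS.
move=> S j k jk jS kS; rewrite /LL -!big_split /=; apply: ler_sum => t _.
rewrite -!mulrDr; apply: ler_wpM2l; first exact: lam_ge0.
set T := TT xh t.
have jTS : j \notin T :&: S by rewrite inE negb_and jS orbT.
have kTS : k \notin T :&: S by rewrite inE negb_and kS orbT.
case hj: (j \in T); case hk: (k \in T).
- rewrite !setI_U1_in //; exact: hs.
- rewrite !(setI_U1_in hj) ?(setI_U1_notin (negbT hk)) ?(setI_U1_in hj).
  by [].
- rewrite !(setI_U1_notin (negbT hj)) ?(setI_U1_in hk) ?(setI_U1_notin (negbT hj)).
  by rewrite addrC.
- rewrite !setI_U1_notin ?hj ?hk //.
Qed.

Theorem proposition2 (R : realType) (n : nat)
    (Q' : {set 'I_n} -> R) (Q : ('I_n -> R) -> R)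
    (hext : forall A : {set 'I_n}, Q (indic R A) = Q' A)
    (hsub : monotone_submodular Q')
    (hmon : compwise_nondecr Q) :
  forall xh : 'I_n -> R, in_box xh ->
    monotone_submodular (fun I : {set 'I_n} => cut_violation Q xh I).
Proof.
move=> xh hbox.
have -> : (fun I : {set 'I_n} => cut_violation Q xh I) = LL Q' xh.
  by apply/funext => I; apply: cvE.
exact: LL_ms.
Qed.
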